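(* Let $a,b$ be positive integers with $a\ge b$ such that either $b\ge 2$, or $b=1$ and $a\ge 5$, and let $A=\begin{pmatrix}2&-a\\-b&2\end{pmatrix}$. Then every $\pi$-system $\Sigma\subseteq\Delta^+_{\mathrm{re}}$ of $\mathfrak g(A)$ satisfies $|\Sigma|\le 2$. If $|\Sigma|=2$, then $\Sigma=\{\beta_1^j,\beta_2^k\}$ for some $j,k\in\mathbb Z_+$; in particular $\Sigma$ is linearly independent. Conversely: (1) if $b\ge 2$, then $\{\beta_1^j,\beta_2^k\}$ is a $\pi$-system for all $j,k\in\mathbb Z_+$; (2) if $b=1$ and $a\ge 5$, then $\{\beta_1^j,\beta_2^k\}$ is a $\pi$-system if and only if $(j,k)\neq(1,0)$.
   Context: Let $\mathfrak g(A)$ be the Kac–Moody algebra of the generalized Cartan matrix $A=\begin{pmatrix}2&-a\\-b&2\end{pmatrix}$, with simple roots $\alpha_1,\alpha_2$, root system $\Delta$, set of real roots $\Delta_{\mathrm{re}}$ and positive real roots $\Delta^+_{\mathrm{re}}$. $\mathbb Z_+=\{0,1,2,\dots\}$. Define integers $c_j,d_j$ ($j\in\mathbb Z_+$) by $c_0=d_0=0$, $c_1=d_1=1$, $c_{k+2}+c_k=a\,d_{k+1}$, $d_{k+2}+d_k=b\,c_{k+1}$. For $j\in\mathbb Z_+$ set $\beta_1^j=c_j\alpha_1+d_{j+1}\alpha_2$ and $\beta_2^j=c_{j+1}\alpha_1+d_j\alpha_2$; then $\Delta^+_{\mathrm{re}}=\{\beta_1^j,\beta_2^j: j\in\mathbb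 Z_+\}$. A subset $\Sigma\subseteq\Delta_{\mathrm{re}}$ is called a $\pi$-system if $\alpha-\beta\notin\Delta$ for all $\alpha,\beta\in\Sigma$ (here $0\notin\Delta$). *)

(* Defs.v *)
(* roots of the rank-2 Kac-Moody algebra g(A), A = [[2,-a],[-b,2]],
   are represented by their coordinates (x,y) in the basis alpha_1, alpha_2 of the
   root lattice Q = Z alpha_1 + Z alpha_2. *)
From Stdlib Require Import ZArith List.
Open Scope Z_scope.

Definition root := (Z * Z)%type.

Definition simple_root (i : bool) : root := if i then (1, 0) else (0, 1).

(* <x a1 + y a2, a1^v> = 2x - a y ;  <x a1 + y a2, a2^v> = -b x + 2y  (a_ij = <a_i^v, a_j>) *)
Definition pair1 (a : Z) (r : root) : Z := 2 * fst r - a * snd r.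
Definition pair2 (b : Z) (r : root) : Z := - b * fst r + 2 * snd r.

Definition refl1 (a : Z) (r : root) : root := (fst r - pair1 a r, snd r).
Definition refl2 (b : Z) (r : root) : root := (fst r, snd r - pair2 b r).

(* action of the Weyl group element r_{i1} ... r_{in} (a word in the generators;
   true = r_1, false = r_2) *)
Definition weyl_act (a b : Z) (w : list bool) (r : root) : root :=
  fold_right (fun (i : bool) v => if i then refl1 a v else refl2 b v) r w.

Definition real_root (a b : Z) (r : root) : Prop :=
  exists (w : list bool) (i : bool), r = weyl_act a b w (simple_root i).

(* Kac's fundamental set K: nonzero elements of Q_+ with connected support
   on which all <., a_i^v> are <= 0. Support {1,2} is connected iff a_12 = -a <> 0. *)
Definition fund_set (a b : Z) (r : root) : Prop :=
  0 <= fst r /\ 0 <= snd r /\ r <> (0, 0) /\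
  (0 < fst r -> 0 < snd r -> - a <> 0) /\
  pair1 a r <= 0 /\ pair2 b r <= 0.

(* positive imaginary roots: Delta^im_+ = W . K  (Kac, Thm 5.4) *)
Definition pos_imag_root (a b : Z) (r : root) : Prop :=
  exists (w : list bool) (k : root), fund_set a b k /\ r = weyl_act a b w k.

Definition imag_root (a b : Z) (r : root) : Prop :=
  pos_imag_root a b r \/ pos_imag_root a b (- fst r, - snd r).

Definition is_root (a b : Z) (r : root) : Prop := real_root a b r \/ imag_root a b r.

Definition pos_real_root (a b : Z) (r : root) : Prop :=
  real_root a b r /\ 0 <= fst r /\ 0 <= snd r.

Definition rsub (r s : root) : root := (fst r - fst s, snd r - snd s).

Definition pi_system (a b : Z) (S : root -> Prop) : Prop :=
  (forall r, S r -> real_root a b r) /\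
  (forall x y, S x -> S y -> ~ is_root a b (rsub x y)).

(* the sequences c_j, d_j: cd k = ((c_k, d_k), (c_{k+1}, d_{k+1})) *)
Fixpoint cd (a b : Z) (k : nat) : (Z * Z) * (Z * Z) :=
  match k with
  | O => ((0, 0), (1, 1))
  | S k' => let '((c0, d0), (c1, d1)) := cd a b k' in
            ((c1, d1), (a * d1 - c0, b * c1 - d0))
  end.

Definition cseq (a b : Z) (k : nat) : Z := fst (fst (cd a b k)).
Definition dseq (a b : Z) (k : nat) : Z := snd (fst (cd a b k)).

Definition beta1 (a b : Z) (j : nat) : root := (cseq a b j, dseq a b (S j)).
Definition beta2 (a b : Z) (j : nat) : root := (cseq a b (S j), dseq a b j).

Definition pair_set (x y : root) : root -> Prop := fun r => r = x \/ r = y.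

Definition lin_indep2 (x y : root) : Prop :=
  forall p q : Z, p * fst x + q * fst y = 0 -> p * snd x + q * snd y = 0 -> p = 0 /\ q = 0.

(* Main.v *)
Require Import Defs.
From Stdlib Require Import ZArith List.
From Stdlib Require Import Lia Arith Bool.
Open Scope Z_scope.

Lemma cd_S a b n : cd a b (S n) =
  (snd (cd a b n), (a * snd (snd (cd a b n)) - fst (fst (cd a b n)),
                    b * fst (snd (cd a b n)) - snd (fst (cd a b n)))).
Proof. simpl. destruct (cd a b n) as [[c0 d0] [c1 d1]]. reflexivity. Qed.

Lemma c_rec a b n : cseq a b (S (S n)) = a * dseq a b (S n) - cseq a b n.
Proof. unfold cseq, dseq. rewrite (cd_S a b (S n)), (cd_S a b n). reflexivity. Qed.

Lemma d_rec a b n : dseq a b (S (S n)) = b * cseq a b (S n) - dseq a b n.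
Proof. unfold cseq, dseq. rewrite (cd_S a b (S n)), (cd_S a b n). reflexivity. Qed.

Lemma c0 a b : cseq a b 0 = 0. Proof. reflexivity. Qed.
Lemma c1 a b : cseq a b 1 = 1. Proof. reflexivity. Qed.
Lemma d0 a b : dseq a b 0 = 0. Proof. reflexivity. Qed.
Lemma d1 a b : dseq a b 1 = 1. Proof. reflexivity. Qed.
Lemma c2 a b : cseq a b 2 = a. Proof. rewrite c_rec, d1, c0. ring. Qed.
Lemma d2 a b : dseq a b 2 = b. Proof. rewrite d_rec, c1, d0. ring. Qed.
Lemma c3 a b : cseq a b 3 = a*b - 1. Proof. rewrite c_rec, d2, c1. ring. Qed.
Lemma d3 a b : dseq a b 3 = a*b - 1. Proof. rewrite d_rec, c2, d1. ring. Qed.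
Lemma c4 a b : cseq a b 4 = a*(a*b-1) - a. Proof. rewrite c_rec, d3, c2. ring. Qed.
Lemma d4 a b : dseq a b 4 = b*(a*b-1) - b. Proof. rewrite d_rec, c3, d2. ring. Qed.
Lemma c5 a b : cseq a b 5 = a*(b*(a*b-1) - b) - (a*b-1). Proof. rewrite c_rec, d4, c3. ring. Qed.

Lemma inv_gen a b (x y : nat -> Z) : 1 <= a -> 1 <= b -> 4 <= a*b ->
 (forall n, x (S (S n)) = a * y (S n) - x n) -> (forall n, y (S (S n)) = b * x (S n) - y n) ->
 0 <= x 0%nat -> 0 <= y 0%nat -> 0 <= x 1%nat -> 0 <= y 1%nat ->
 2 * x 0%nat <= a * y 1%nat -> 2 * y 0%nat <= b * x 1%nat ->
 forall n, 0 <= x n /\ 0 <= y n /\ 0 <= x (S n) /\ 0 <= y (S n) /\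
           2 * x n <= a * y (S n) /\ 2 * y n <= b * x (S n).
Proof.
  intros ha hb hab hx hy H1 H2 H3 H4 H5 H6 n.
  induction n as [|n IH]; [tauto|].
  destruct IH as (I1 & I2 & I3 & I4 & I5 & I6).
  rewrite hx, hy.
  assert (P1 : a * (2 * y n) <= a * (b * x (S n))) by (apply Z.mul_le_mono_nonneg_l; lia).
  assert (P2 : b * (2 * x n) <= b * (a * y (S n))) by (apply Z.mul_le_mono_nonneg_l; lia).
  assert (P3 : 4 * x (S n) <= a*b * x (S n)) by (apply Z.mul_le_mono_nonneg_r; lia).
  assert (P4 : 4 * y (S n) <= a*b * y (S n)) by (apply Z.mul_le_mono_nonneg_r; lia).
  repeat split; try lia; nia.
Qed.

Definition ee a b n := cseq a b (S (S n)) - cseq a b n.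
Definition ff a b n := dseq a b (S (S n)) - dseq a b n.

Lemma ee_rec a b n : ee a b (S (S n)) = a * ff a b (S n) - ee a b n.
Proof. unfold ee, ff. rewrite (c_rec a b (S (S n))), (c_rec a b n). ring. Qed.
Lemma ff_rec a b n : ff a b (S (S n)) = b * ee a b (S n) - ff a b n.
Proof. unfold ee, ff. rewrite (d_rec a b (S (S n))), (d_rec a b n). ring. Qed.


Lemma Jcd a b : 1 <= a -> 1 <= b -> 4 <= a*b -> forall n,
  0 <= cseq a b n /\ 0 <= dseq a b n /\ 0 <= cseq a b (S n) /\ 0 <= dseq a b (S n) /\
  2 * cseq a b n <= a * dseq a b (S n) /\ 2 * dseq a b n <= b * cseq a b (S n).
Proof.
  intros. apply inv_gen; auto using c_rec, d_rec; rewrite ?c0, ?c1, ?d0, ?d1; lia.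
Qed.

Lemma Jef a b : 1 <= a -> 1 <= b -> 4 <= a*b -> forall n,
  0 <= ee a b n /\ 0 <= ff a b n /\ 0 <= ee a b (S n) /\ 0 <= ff a b (S n) /\
  2 * ee a b n <= a * ff a b (S n) /\ 2 * ff a b n <= b * ee a b (S n).
Proof.
  intros. apply inv_gen; auto using ee_rec, ff_rec; unfold ee, ff;
  rewrite ?c0, ?c1, ?d0, ?d1, ?c2, ?d2, ?c3, ?d3; nia.
Qed.

Lemma ee_mono a b : 1 <= a -> 1 <= b -> 4 <= a*b -> forall k n, ee a b n <= ee a b (n + 2*k).
Proof.
  intros ha hb hab k. induction k as [|k IH]; intros n.
  - rewrite Nat.add_0_r. lia.
  - replace (n + 2 * S k)%nat with (S (S (n + 2*k))) by lia.
    rewrite ee_rec. pose proof (Jef a b ha hb hab (n + 2*k)%nat). specialize (IH n). lia.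
Qed.

Lemma ff_mono a b : 1 <= a -> 1 <= b -> 4 <= a*b -> forall k n, ff a b n <= ff a b (n + 2*k).
Proof.
  intros ha hb hab k. induction k as [|k IH]; intros n.
  - rewrite Nat.add_0_r. lia.
  - replace (n + 2 * S k)%nat with (S (S (n + 2*k))) by lia.
    rewrite ff_rec. pose proof (Jef a b ha hb hab (n + 2*k)%nat). specialize (IH n). lia.
Qed.

Definition qq a b (r : root) : Z := 2*b*fst r*fst r - 2*a*b*fst r*snd r + 2*a*snd r*snd r.
Definition neg (r : root) : root := (- fst r, - snd r).

Lemma qq_refl1 a b r : qq a b (refl1 a r) = qq a b r.
Proof. destruct r; unfold qq, refl1, pair1; cbn [fst snd]; ring. Qed.
Lemma qq_refl2 a b r : qq a b (refl2 b r) = qq a b r.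
Proof. destruct r; unfold qq, refl2, pair2; cbn [fst snd]; ring. Qed.
Lemma qq_neg a b r : qq a b (neg r) = qq a b r.
Proof. destruct r; unfold qq, neg; cbn [fst snd]; ring. Qed.
Lemma weyl_cons a b i w r : weyl_act a b (i :: w) r =
  if i then refl1 a (weyl_act a b w r) else refl2 b (weyl_act a b w r).
Proof. reflexivity. Qed.
Lemma qq_weyl a b w r : qq a b (weyl_act a b w r) = qq a b r.
Proof. induction w as [|i w IH]; [reflexivity|]. rewrite weyl_cons. destruct i; rewrite ?qq_refl1, ?qq_refl2; auto. Qed.

Lemma refl1_inv a r : refl1 a (refl1 a r) = r.
Proof. destruct r; unfold refl1, pair1; cbn [fst snd]; f_equal; ring. Qed.
Lemma refl2_inv b r : refl2 b (refl2 b r) = r.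
Proof. destruct r; unfold refl2, pair2; cbn [fst snd]; f_equal; ring. Qed.
Lemma refl1_neg a r : refl1 a (neg r) = neg (refl1 a r).
Proof. destruct r; unfold refl1, pair1, neg; cbn [fst snd]; f_equal; ring. Qed.
Lemma refl2_neg b r : refl2 b (neg r) = neg (refl2 b r).
Proof. destruct r; unfold refl2, pair2, neg; cbn [fst snd]; f_equal; ring. Qed.
Lemma neg_neg r : neg (neg r) = r.
Proof. destruct r; unfold neg; cbn [fst snd]; f_equal; ring. Qed.
Lemma refl1_rsub a r s : refl1 a (rsub r s) = rsub (refl1 a r) (refl1 a s).
Proof. destruct r, s; unfold refl1, pair1, rsub; cbn [fst snd]; f_equal; ring. Qed.
Lemma refl2_rsub b r s : refl2 b (rsub r s) = rsub (refl2 b r) (refl2 b s).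
Proof. destruct r, s; unfold refl2, pair2, rsub; cbn [fst snd]; f_equal; ring. Qed.
Lemma rsub_swap r s : rsub s r = neg (rsub r s).
Proof. destruct r, s; unfold neg, rsub; cbn [fst snd]; f_equal; ring. Qed.
Lemma rsub_self r : rsub r r = (0,0).
Proof. destruct r; unfold rsub; cbn [fst snd]; f_equal; ring. Qed.

Lemma refl1_nz a r : refl1 a r = (0,0) -> r = (0,0).
Proof. destruct r as [x y]; unfold refl1, pair1; cbn [fst snd]; intros H; pose proof (f_equal fst H) as H1; pose proof (f_equal snd H) as H2; cbn [fst snd] in H1, H2; subst y; f_equal; lia. Qed.
Lemma refl2_nz b r : refl2 b r = (0,0) -> r = (0,0).
Proof. destruct r as [x y]; unfold refl2, pair2; cbn [fst snd]; intros H; pose proof (f_equal fst H) as H1; pose proof (f_equal snd H) as H2; cbn [fst snd] in H1, H2; subst x; f_equal; lia. Qed.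
Lemma weyl_nz a b w r : weyl_act a b w r = (0,0) -> r = (0,0).
Proof. induction w as [|i w IH]; [auto|]. rewrite weyl_cons. destruct i; intros H; apply IH;
  [apply (refl1_nz a) | apply (refl2_nz b)]; auto. Qed.

Lemma root_nz a b r : is_root a b r -> r <> (0,0).
Proof.
  intros [[w [i ->]]|[[w [k [Hk ->]]]|[w [k [Hk E]]]]] H.
  - apply weyl_nz in H. destruct i; discriminate.
  - apply weyl_nz in H. destruct Hk as (_&_&Hk&_). auto.
  - rewrite H in E. cbn [fst snd] in E. symmetry in E. apply weyl_nz in E. destruct Hk as (_&_&Hk&_). auto.
Qed.

Lemma root_q a b r : 1 <= a -> 1 <= b -> is_root a b r ->
  qq a b r <= 0 \/ qq a b r = 2*a \/ qq a b r = 2*b.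
Proof.
  intros ha hb [[w [i ->]]|[[w [k [Hk ->]]]|[w [k [Hk E]]]]].
  - rewrite qq_weyl. destruct i; unfold qq, simple_root; cbn [fst snd]; lia.
  - rewrite qq_weyl. left. destruct k as [x y]. destruct Hk as (Hx&Hy&_&_&P1&P2).
    unfold pair1, pair2, qq in *; cbn [fst snd] in *.
    assert (E: 2*b*x*x - 2*a*b*x*y + 2*a*y*y = b*x*(2*x - a*y) + a*y*(-b*x+2*y)) by ring.
    rewrite E. assert (0 <= b*x) by nia. assert (0 <= a*y) by nia. nia.
  - left. rewrite <- (qq_neg a b r). change (neg r) with (- fst r, - snd r). rewrite E, qq_weyl.
    destruct k as [x y]. destruct Hk as (Hx&Hy&_&_&P1&P2).
    unfold pair1, pair2, qq in *; cbn [fst snd] in *.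
    assert (E2: 2*b*x*x - 2*a*b*x*y + 2*a*y*y = b*x*(2*x - a*y) + a*y*(-b*x+2*y)) by ring.
    rewrite E2. assert (0 <= b*x) by nia. assert (0 <= a*y) by nia. nia.
Qed.

Lemma q_sign a b x y : 1 <= a -> 1 <= b -> qq a b (x,y) <= 0 -> 0 <= x*y.
Proof.
  unfold qq; cbn [fst snd]; intros ha hb H.
  assert (0 <= b*(x*x)) by nia. assert (0 <= a*(y*y)) by nia.
  assert (0 <= a*b*(x*y)) by nia.
  destruct (Z.le_gt_cases 0 (x*y)); auto.
  assert (a*b*(x*y) < 0). { apply Z.mul_pos_neg; nia. } lia.
Qed.

Lemma imag_of_q a b : 1 <= a -> 1 <= b -> forall n r, Z.to_nat (fst r + snd r) = n ->
  0 <= fst r -> 0 <= snd r -> r <> (0,0) -> qq a b r <= 0 -> pos_imag_root a b r.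
Proof.
  intros ha hb n. induction n as [n IH] using lt_wf_ind.
  intros [x y] Hn Hx Hy Hnz Hq; cbn [fst snd] in *.
  assert (Hx0 : 0 < x). { destruct (Z.eq_dec x 0); [|lia]. subst.
     unfold qq in Hq; cbn [fst snd] in Hq. assert (y = 0) by nia. subst; congruence. }
  assert (Hy0 : 0 < y). { destruct (Z.eq_dec y 0); [|lia]. subst.
     unfold qq in Hq; cbn [fst snd] in Hq. nia. }
  destruct (Z_lt_le_dec 0 (pair1 a (x,y))) as [P1|P1].
  - set (r' := refl1 a (x,y)).
    assert (Hq' : qq a b r' <= 0) by (unfold r'; rewrite qq_refl1; auto).
    assert (Hr' : r' = (a*y - x, y)) by (unfold r', refl1, pair1; cbn [fst snd]; f_equal; ring).
    rewrite Hr' in Hq'. apply q_sign in Hq'; auto.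
    assert (0 <= a*y - x) by nia.
    unfold pair1 in P1; cbn [fst snd] in P1.
    assert (Hi : pos_imag_root a b r').
    { rewrite Hr'. apply (IH (Z.to_nat (a*y - x + y))); cbn [fst snd]; auto; try lia.
      intro H'; injection H'; lia. rewrite <- Hr'. unfold r'. rewrite qq_refl1. auto. }
    destruct Hi as [w [k [Hk E]]]. exists (true :: w), k. split; auto. rewrite weyl_cons, <- E.
    unfold r'. rewrite refl1_inv. auto.
  - destruct (Z_lt_le_dec 0 (pair2 b (x,y))) as [P2|P2].
    + set (r' := refl2 b (x,y)).
      assert (Hq' : qq a b r' <= 0) by (unfold r'; rewrite qq_refl2; auto).
      assert (Hr' : r' = (x, b*x - y)) by (unfold r', refl2, pair2; cbn [fst snd]; f_equal; ring).
      rewrite Hr' in Hq'. apply q_sign in Hq'; auto.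
      assert (0 <= b*x - y) by nia.
      unfold pair2 in P2; cbn [fst snd] in P2.
      assert (Hi : pos_imag_root a b r').
      { rewrite Hr'. apply (IH (Z.to_nat (x + (b*x - y)))); cbn [fst snd]; auto; try lia.
        intro H'; injection H'; lia. rewrite <- Hr'. unfold r'. rewrite qq_refl2. auto. }
      destruct Hi as [w [k [Hk E]]]. exists (false :: w), k. split; auto. rewrite weyl_cons, <- E.
      unfold r'. rewrite refl2_inv. auto.
    + exists nil, (x,y). split; auto. unfold fund_set; cbn [fst snd]. repeat split; auto; lia.
Qed.

Lemma root_of_q a b r : 1 <= a -> 1 <= b -> r <> (0,0) -> qq a b r <= 0 -> is_root a b r.
Proof.
  intros ha hb Hnz Hq. right. destruct r as [x y].
  pose proof (q_sign a b x y ha hb Hq).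
  assert (Hs : (0<=x/\0<=y) \/ (x<=0/\y<=0)).
  { destruct (Z.le_gt_cases 0 x); destruct (Z.le_gt_cases 0 y); try tauto.
    - destruct (Z.eq_dec x 0); [right; lia|]. assert (x*y < 0) by (apply Z.mul_pos_neg; lia). lia.
    - destruct (Z.eq_dec y 0); [right; lia|]. assert (x*y < 0) by (apply Z.mul_neg_pos; lia). lia.
    - right; lia. }
  destruct Hs as [[? ?]|[? ?]].
  - left. eapply imag_of_q; eauto.
  - right. eapply imag_of_q; cbn [fst snd]; eauto; try lia.
    intro Hz; injection Hz; intros; apply Hnz; f_equal; lia.
    change (- x, - y) with (neg (x,y)). rewrite qq_neg. auto.
Qed.

Lemma root_refl1 a b r : is_root a b r -> is_root a b (refl1 a r).
Proof.
  intros [[w [i ->]]|[[w [k [Hk ->]]]|[w [k [Hk E]]]]].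
  - left. exists (true :: w), i. reflexivity.
  - right. left. exists (true :: w), k. auto.
  - right. right. exists (true :: w), k. split; auto. rewrite weyl_cons, <- E.
    change (- fst r, - snd r) with (neg r). rewrite refl1_neg. reflexivity.
Qed.
Lemma root_refl2 a b r : is_root a b r -> is_root a b (refl2 b r).
Proof.
  intros [[w [i ->]]|[[w [k [Hk ->]]]|[w [k [Hk E]]]]].
  - left. exists (false :: w), i. reflexivity.
  - right. left. exists (false :: w), k. auto.
  - right. right. exists (false :: w), k. split; auto. rewrite weyl_cons, <- E.
    change (- fst r, - snd r) with (neg r). rewrite refl2_neg. reflexivity.
Qed.

Lemma b1_refl1 a b j : refl1 a (beta1 a b j) = beta2 a b (S j).
Proof. unfold beta1, beta2, refl1, pair1; cbn [fst snd]; rewrite c_rec; f_equal; ring. Qed.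
Lemma b2_refl1 a b j : refl1 a (beta2 a b (S j)) = beta1 a b j.
Proof. unfold beta1, beta2, refl1, pair1; cbn [fst snd]; rewrite c_rec; f_equal; ring. Qed.
Lemma b20_refl1 a b : refl1 a (beta2 a b 0) = neg (beta2 a b 0).
Proof. unfold beta2, refl1, pair1, neg; cbn [fst snd]; rewrite c1, d0; f_equal; ring. Qed.
Lemma b2_refl2 a b j : refl2 b (beta2 a b j) = beta1 a b (S j).
Proof. unfold beta1, beta2, refl2, pair2; cbn [fst snd]; rewrite d_rec; f_equal; ring. Qed.
Lemma b1_refl2 a b j : refl2 b (beta1 a b (S j)) = beta2 a b j.
Proof. unfold beta1, beta2, refl2, pair2; cbn [fst snd]; rewrite d_rec; f_equal; ring. Qed.
Lemma b10_refl2 a b : refl2 b (beta1 a b 0) = neg (beta1 a b 0).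
Proof. unfold beta1, refl2, pair2, neg; cbn [fst snd]; rewrite c0, d1; f_equal; ring. Qed.

Lemma real_refl1 a b r : real_root a b r -> real_root a b (refl1 a r).
Proof. intros [w [i ->]]. exists (true :: w), i. reflexivity. Qed.
Lemma real_refl2 a b r : real_root a b r -> real_root a b (refl2 b r).
Proof. intros [w [i ->]]. exists (false :: w), i. reflexivity. Qed.

Lemma beta_real a b j : real_root a b (beta1 a b j) /\ real_root a b (beta2 a b j).
Proof.
  induction j as [|j [IH1 IH2]].
  - split; [exists nil, false | exists nil, true]; unfold beta1, beta2;
    rewrite ?c0, ?c1, ?d0, ?d1; reflexivity.
  - rewrite <- b2_refl2, <- b1_refl1. split; [apply real_refl2 | apply real_refl1]; auto.
Qed.

Definition Pb a b r := exists j, r = beta1 a b j \/ r = beta2 a b j \/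
   r = neg (beta1 a b j) \/ r = neg (beta2 a b j).

Lemma Pb_refl1 a b r : Pb a b r -> Pb a b (refl1 a r).
Proof.
  intros [j [->|[->|[->| ->]]]].
  - exists (S j). right; left. apply b1_refl1.
  - destruct j as [|j].
    + exists 0%nat. right; right; right. apply b20_refl1.
    + exists j. left. apply b2_refl1.
  - exists (S j). right; right; right. rewrite refl1_neg, b1_refl1. auto.
  - destruct j as [|j].
    + exists 0%nat. right; left. rewrite refl1_neg, b20_refl1, neg_neg. auto.
    + exists j. right; right; left. rewrite refl1_neg, b2_refl1. auto.
Qed.
Lemma Pb_refl2 a b r : Pb a b r -> Pb a b (refl2 b r).
Proof.
  intros [j [->|[->|[->| ->]]]].
  - destruct j as [|j].
    + exists 0%nat. right; right; left. apply b10_refl2.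
    + exists j. right; left. apply b1_refl2.
  - exists (S j). left. apply b2_refl2.
  - destruct j as [|j].
    + exists 0%nat. left. rewrite refl2_neg, b10_refl2, neg_neg. auto.
    + exists j. right; right; right. rewrite refl2_neg, b1_refl2. auto.
  - exists (S j). right; right; left. rewrite refl2_neg, b2_refl2. auto.
Qed.

Lemma real_classify a b r : real_root a b r -> Pb a b r.
Proof.
  intros [w [i ->]]. induction w as [|k w IH].
  - exists 0%nat. destruct i; [right; left | left]; unfold beta1, beta2;
    rewrite ?c0, ?c1, ?d0, ?d1; reflexivity.
  - rewrite weyl_cons. destruct k; [apply Pb_refl1 | apply Pb_refl2]; auto.
Qed.

Lemma c_pos a b : 1 <= a -> 1 <= b -> 4 <= a*b -> forall n, 1 <= cseq a b (S n) /\ 1 <= cseq a b (S (S n)).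
Proof.
  intros ha hb hab n. induction n as [|n IH].
  - rewrite c1, c2. lia.
  - split; [tauto|]. pose proof (Jef a b ha hb hab (S n)). unfold ee in H. lia.
Qed.
Lemma d_pos a b : 1 <= a -> 1 <= b -> 4 <= a*b -> forall n, 1 <= dseq a b (S n) /\ 1 <= dseq a b (S (S n)).
Proof.
  intros ha hb hab n. induction n as [|n IH].
  - rewrite d1, d2. lia.
  - split; [tauto|]. pose proof (Jef a b ha hb hab (S n)). unfold ff in H. lia.
Qed.

Lemma pos_classify a b r : 1 <= a -> 1 <= b -> 4 <= a*b -> pos_real_root a b r ->
  exists j, r = beta1 a b j \/ r = beta2 a b j.
Proof.
  intros ha hb hab [Hr [H1 H2]]. destruct (real_classify a b r Hr) as [j [E|[E|[E|E]]]];
  exists j; auto; exfalso; subst r; unfold neg, beta1, beta2 in *; cbn [fst snd] in *.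
  - pose proof (d_pos a b ha hb hab j). lia.
  - pose proof (c_pos a b ha hb hab j). lia.
Qed.

Lemma qv a b j : qq a b (beta1 a b j) = (if Nat.even j then 2*a else 2*b) /\
                 qq a b (beta2 a b j) = (if Nat.even j then 2*b else 2*a).
Proof.
  induction j as [|j [IH1 IH2]].
  - unfold qq, beta1, beta2; cbn [fst snd]; rewrite c0, c1, d0, d1; cbn [Nat.even]; split; ring.
  - rewrite <- b2_refl2, <- b1_refl1, qq_refl1, qq_refl2, IH1, IH2.
    rewrite Nat.even_succ, <- Nat.negb_even. destruct (Nat.even j); auto.
Qed.

Lemma ee0 a b : ee a b 0 = a. Proof. unfold ee; rewrite c2, c0; ring. Qed.
Lemma ee1 a b : ee a b 1 = a*b-2. Proof. unfold ee; rewrite c3, c1; ring. Qed.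
Lemma ee2 a b : ee a b 2 = a*(a*b-3). Proof. unfold ee; rewrite c4, c2; ring. Qed.
Lemma ee3 a b : ee a b 3 = (a*b)*(a*b) - 4*(a*b) + 2. Proof. unfold ee; rewrite c5, c3; ring. Qed.
Lemma ff0 a b : ff a b 0 = b. Proof. unfold ff; rewrite d2, d0; ring. Qed.
Lemma ff1 a b : ff a b 1 = a*b-2. Proof. unfold ff; rewrite d3, d1; ring. Qed.
Lemma ff2 a b : ff a b 2 = b*(a*b-3). Proof. unfold ff; rewrite d4, d2; ring. Qed.

Lemma ee_from a b m n : 1 <= a -> 1 <= b -> 4 <= a*b -> (m <= n)%nat -> Nat.even m = Nat.even n ->
  ee a b m <= ee a b n.
Proof.
  intros ha hb hab Hle Hev. destruct (Nat.Even_or_Odd (n - m)) as [[k Hk]|[k Hk]].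
  - replace n with (m + 2*k)%nat by lia. apply ee_mono; auto.
  - exfalso. replace n with (S (m + 2*k))%nat in Hev by lia.
    rewrite Nat.even_succ, <- Nat.negb_even, Nat.even_add_mul_2 in Hev.
    destruct (Nat.even m); discriminate.
Qed.
Lemma ff_from a b m n : 1 <= a -> 1 <= b -> 4 <= a*b -> (m <= n)%nat -> Nat.even m = Nat.even n ->
  ff a b m <= ff a b n.
Proof.
  intros ha hb hab Hle Hev. destruct (Nat.Even_or_Odd (n - m)) as [[k Hk]|[k Hk]].
  - replace n with (m + 2*k)%nat by lia. apply ff_mono; auto.
  - exfalso. replace n with (S (m + 2*k))%nat in Hev by lia.
    rewrite Nat.even_succ, <- Nat.negb_even, Nat.even_add_mul_2 in Hev.
    destruct (Nat.even m); discriminate.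
Qed.

Lemma ee_ge1 a b n : 1 <= a -> 1 <= b -> 4 <= a*b -> 1 <= ee a b n.
Proof.
  intros ha hb hab. destruct (Nat.even n) eqn:E.
  - pose proof (ee_from a b 0 n ha hb hab ltac:(lia) (eq_sym E)). rewrite ee0 in H. lia.
  - destruct n as [|n]; [discriminate|].
    pose proof (ee_from a b 1 (S n) ha hb hab ltac:(lia) (eq_sym E)). rewrite ee1 in H. lia.
Qed.
Lemma ff_ge1 a b n : 1 <= a -> 1 <= b -> 4 <= a*b -> 1 <= ff a b n.
Proof.
  intros ha hb hab. destruct (Nat.even n) eqn:E.
  - pose proof (ff_from a b 0 n ha hb hab ltac:(lia) (eq_sym E)). rewrite ff0 in H. lia.
  - destruct n as [|n]; [discriminate|].
    pose proof (ff_from a b 1 (S n) ha hb hab ltac:(lia) (eq_sym E)). rewrite ff1 in H. lia.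
Qed.

Lemma R1 a b j k : qq a b (rsub (beta1 a b (S (S j))) (beta2 a b k)) =
                   qq a b (rsub (beta1 a b j) (beta2 a b (S (S k)))).
Proof.
  rewrite <- (b2_refl2 a b (S j)), <- (b1_refl1 a b j).
  rewrite <- (b1_refl2 a b k), <- (b2_refl1 a b (S k)).
  rewrite <- refl2_rsub, <- refl1_rsub, qq_refl2, qq_refl1. reflexivity.
Qed.
Lemma R2 a b n : qq a b (rsub (beta1 a b 1) (beta2 a b n)) =
                 qq a b (rsub (beta1 a b (S n)) (beta2 a b 0)).
Proof.
  rewrite <- (b2_refl2 a b 0), <- (b1_refl2 a b n).
  rewrite <- refl2_rsub, qq_refl2, rsub_swap, qq_neg. reflexivity.
Qed.

Lemma qred a b j : forall k, qq a b (rsub (beta1 a b j) (beta2 a b k)) =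
  if Nat.even j then qq a b (rsub (beta1 a b 0) (beta2 a b (j+k)))
  else qq a b (rsub (beta1 a b (j+k)) (beta2 a b 0)).
Proof.
  assert (H : forall j, (forall k, qq a b (rsub (beta1 a b j) (beta2 a b k)) =
  if Nat.even j then qq a b (rsub (beta1 a b 0) (beta2 a b (j+k)))
  else qq a b (rsub (beta1 a b (j+k)) (beta2 a b 0))) /\
  (forall k, qq a b (rsub (beta1 a b (S j)) (beta2 a b k)) =
  if Nat.even (S j) then qq a b (rsub (beta1 a b 0) (beta2 a b (S j+k)))
  else qq a b (rsub (beta1 a b (S j+k)) (beta2 a b 0)))).
  { intros j0. induction j0 as [|j0 [IH1 IH2]].
    - split; intros k; simpl; auto. apply R2.
    - split; auto. intros k. rewrite R1, IH1, Nat.even_succ_succ.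
      replace (j0 + S (S k))%nat with (S (S j0) + k)%nat by lia. reflexivity. }
  apply H.
Qed.

Lemma E1 a b n : qq a b (rsub (beta1 a b 0) (beta2 a b n)) = qq a b (beta2 a b n) + 2*a + 2*a*ff a b n.
Proof. unfold qq, rsub, beta1, beta2, ff; cbn [fst snd]; rewrite c0, d1, d_rec; ring. Qed.
Lemma E2 a b n : qq a b (rsub (beta1 a b n) (beta2 a b 0)) = qq a b (beta1 a b n) + 2*b + 2*b*ee a b n.
Proof. unfold qq, rsub, beta1, beta2, ee; cbn [fst snd]; rewrite c1, d0, c_rec; ring. Qed.

Lemma qdiff a b j k : qq a b (rsub (beta1 a b j) (beta2 a b k)) =
  if Nat.even j then qq a b (beta2 a b (j+k)) + 2*a + 2*a*ff a b (j+k)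
  else qq a b (beta1 a b (j+k)) + 2*b + 2*b*ee a b (j+k).
Proof. rewrite qred. destruct (Nat.even j); [apply E1|apply E2]. Qed.

Lemma qbig a b j k : 1 <= b -> b <= a -> 4 <= a*b -> (b = 1 -> 5 <= a) ->
  ~ (b = 1 /\ j = 1%nat /\ k = 0%nat) -> 2*a < qq a b (rsub (beta1 a b j) (beta2 a b k)).
Proof.
  intros hb hab h4 h5 hex. assert (ha : 1 <= a) by lia.
  rewrite qdiff. destruct (qv a b (j+k)) as [Q1 Q2].
  destruct (Nat.even j) eqn:Ej.
  - rewrite Q2. pose proof (ff_ge1 a b (j+k) ha hb h4).
    assert (a <= a * ff a b (j+k)) by nia.
    destruct (Nat.even (j+k)); lia.
  - rewrite Q1. pose proof (ee_ge1 a b (j+k) ha hb h4).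
    assert (b <= b * ee a b (j+k)) by nia.
    destruct (Nat.even (j+k)) eqn:Em; [lia|].
    destruct (j+k)%nat as [|[|m]] eqn:Ejk.
    + discriminate.
    + assert (j = 1%nat /\ k = 0%nat) as [-> ->].
      { destruct j as [|j]; [discriminate|]. lia. }
      assert (b <> 1) by tauto. rewrite ee1.
      assert (b*(a*b-2) >= 2*(a*b) - 2*b) by nia. nia.
    + rewrite Nat.even_succ_succ in Em.
      destruct (Z.eq_dec b 1) as [->|Hb1].
      * assert (Hm : (3 <= S (S m))%nat).
        { destruct m; [discriminate|lia]. }
        pose proof (ee_from a 1 3 (S (S m)) ha hb h4 Hm ltac:(rewrite !Nat.even_succ_succ; auto)).
        rewrite ee3 in H1. specialize (h5 eq_refl). nia.
      * pose proof (ee_from a b 1 (S (S m)) ha hb h4 ltac:(lia) ltac:(rewrite !Nat.even_succ_succ; auto)).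
        rewrite ee1 in H1.
        assert (b * ee a b (S (S m)) >= b*(a*b-2)) by nia.
        assert (b*(a*b-2) >= 2*(a*b) - 2*b) by nia. nia.
Qed.

Lemma nonroot a b j k : 1 <= b -> b <= a -> 4 <= a*b -> (b = 1 -> 5 <= a) ->
  ~ (b = 1 /\ j = 1%nat /\ k = 0%nat) ->
  ~ is_root a b (rsub (beta1 a b j) (beta2 a b k)) /\ ~ is_root a b (rsub (beta2 a b k) (beta1 a b j)).
Proof.
  intros hb hab h4 h5 hex. pose proof (qbig a b j k hb hab h4 h5 hex) as Hq.
  split; intros Hr; apply root_q in Hr; try lia; rewrite rsub_swap, qq_neg in Hr; lia.
Qed.

Lemma F1 a b n : qq a b (rsub (beta1 a b 0) (beta1 a b (S n))) = qq a b (beta1 a b (S n)) + 2*a - 2*a*ff a b n.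
Proof. unfold qq, rsub, beta1, ff; cbn [fst snd]; rewrite c0, d1, d_rec; ring. Qed.
Lemma F2 a b n : qq a b (rsub (beta2 a b 0) (beta2 a b (S n))) = qq a b (beta2 a b (S n)) + 2*b - 2*b*ee a b n.
Proof. unfold qq, rsub, beta2, ee; cbn [fst snd]; rewrite c1, d0, c_rec; ring. Qed.

Lemma root11 a b n : 1 <= b -> b <= a -> 4 <= a*b -> (b = 1 -> 5 <= a) -> forall j,
  is_root a b (rsub (beta1 a b j) (beta1 a b (j + S n))) /\
  is_root a b (rsub (beta2 a b j) (beta2 a b (j + S n))).
Proof.
  intros hb hab h4 h5. assert (ha : 1 <= a) by lia. intros j. induction j as [|j [IH1 IH2]].
  - rewrite Nat.add_0_l. split.
    + destruct (Z.eq_dec b 1) as [Hb1|Hb1]; [destruct n as [|n]|].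
      * left. exists (true :: nil), true.
        change (weyl_act a b (true :: nil) (simple_root true)) with (refl1 a (1,0)).
        unfold rsub, beta1, refl1, pair1; rewrite c0, c1, d1, d2; cbn [fst snd]; f_equal; lia.
      * apply root_of_q; auto.
        -- unfold rsub, beta1; rewrite c0. pose proof (c_pos a b ha hb h4 (S n)).
           intro Hz. pose proof (f_equal fst Hz). cbn [fst snd] in *. lia.
        -- rewrite F1. destruct (qv a b (S (S n))) as [Q1 _].
           assert (Hf : 2 <= ff a b (S n)).
           { destruct (Nat.even (S n)) eqn:E.
             - pose proof (ff_from a b 2 (S n) ha hb h4 ltac:(destruct n; [discriminate|lia]) (eq_sym E)).
               rewrite ff2 in H. subst b. lia.
             - pose proof (ff_from a b 1 (S n) ha hb h4 ltac:(lia) (eq_sym E)).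
               rewrite ff1 in H. lia. }
           assert (2*a <= a * ff a b (S n)) by nia.
           destruct (Nat.even (S (S n))); lia.
      * apply root_of_q; auto.
        -- unfold rsub, beta1; rewrite c0. pose proof (c_pos a b ha hb h4 n).
           intro Hz. pose proof (f_equal fst Hz). cbn [fst snd] in *. lia.
        -- rewrite F1. destruct (qv a b (S n)) as [Q1 _].
           assert (Hf : 2 <= ff a b n).
           { destruct n as [|n]. rewrite ff0; lia.
             destruct (Nat.even (S n)) eqn:E.
             - pose proof (ff_from a b 2 (S n) ha hb h4 ltac:(destruct n; [discriminate|lia]) (eq_sym E)).
               rewrite ff2 in H. nia.
             - pose proof (ff_from a b 1 (S n) ha hb h4 ltac:(lia) (eq_sym E)).
               rewrite ff1 in H. lia. }
           assert (2*a <= a * ff a b n) by nia.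
           destruct (Nat.even (S n)); lia.
    + destruct (Z.eq_dec b 1) as [Hb1|Hb1]; [destruct n as [|n]|].
      * left. exists (true :: false :: true :: nil), true.
        change (weyl_act a b (true :: false :: true :: nil) (simple_root true))
          with (refl1 a (refl2 b (refl1 a (1,0)))).
        subst b.
        unfold rsub, beta2, refl1, refl2, pair1, pair2; rewrite c1, c2, d0, d1; cbn [fst snd]; f_equal; ring.
      * apply root_of_q; auto.
        -- unfold rsub, beta2; rewrite d0. pose proof (d_pos a b ha hb h4 (S n)).
           intro Hz. pose proof (f_equal snd Hz). cbn [fst snd] in *. lia.
        -- rewrite F2. destruct (qv a b (S (S n))) as [_ Q2]. subst b.
           assert (En : Nat.even n = negb (Nat.even (S n))) by
             (rewrite Nat.even_succ, <- Nat.negb_even, negb_involutive; reflexivity).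
           rewrite Nat.even_succ_succ, En in Q2.
           destruct (Nat.even (S n)) eqn:E; cbn [negb] in Q2.
           ++ pose proof (ee_from a 1 2 (S n) ha hb h4 ltac:(destruct n; [discriminate|lia]) ltac:(rewrite E; reflexivity)).
              rewrite ee2 in H.
              specialize (h5 eq_refl). nia.
           ++ pose proof (ee_from a 1 1 (S n) ha hb h4 ltac:(lia) ltac:(rewrite E; reflexivity)).
              rewrite ee1 in H. lia.
      * apply root_of_q; auto.
        -- unfold rsub, beta2; rewrite d0. pose proof (d_pos a b ha hb h4 n).
           intro Hz. pose proof (f_equal snd Hz). cbn [fst snd] in *. lia.
        -- rewrite F2. destruct (qv a b (S n)) as [_ Q2].
           rewrite Nat.even_succ, <- Nat.negb_even in Q2.
           destruct (Nat.even n) eqn:E; cbn [negb] in Q2.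
           ++ destruct n as [|n].
              ** rewrite ee0. nia.
              ** pose proof (ee_from a b 2 (S n) ha hb h4 ltac:(destruct n; [discriminate|lia]) ltac:(rewrite E; reflexivity)).
                 rewrite ee2 in H.
                 assert (1 <= a*b-3) by nia.
                 assert (b*(a*(a*b-3)) >= a*b) by nia.
                 assert (b * ee a b (S n) >= b*(a*(a*b-3))) by nia. nia.
           ++ destruct n as [|n]; [discriminate|].
              pose proof (ee_from a b 1 (S n) ha hb h4 ltac:(lia) ltac:(rewrite E; reflexivity)).
              rewrite ee1 in H. nia.
  - change (S j + S n)%nat with (S (j + S n)). split.
    + rewrite <- (b2_refl2 a b j), <- (b2_refl2 a b (j + S n)), <- refl2_rsub. apply root_refl2; auto.
    + rewrite <- (b1_refl1 a b j), <- (b1_refl1 a b (j + S n)), <- refl1_rsub. apply root_refl1; auto.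
Qed.

Definition BB a b (x y : root) : Z :=
  2*b*fst x*fst y - a*b*(fst x*snd y + snd x*fst y) + 2*a*snd x*snd y.

Lemma qq_rsub a b x y : qq a b (rsub x y) = qq a b x + qq a b y - 2 * BB a b x y.
Proof. destruct x, y; unfold qq, BB, rsub; cbn [fst snd]; ring. Qed.

Lemma BB_neg a b j k : 1 <= a -> 1 <= b -> 4 <= a*b -> BB a b (beta1 a b j) (beta2 a b k) < 0.
Proof.
  intros ha hb h4. pose proof (qq_rsub a b (beta1 a b j) (beta2 a b k)) as E.
  rewrite qdiff in E. destruct (qv a b j) as [Q1 _]. destruct (qv a b k) as [_ Q2].
  destruct (qv a b (j+k)) as [Q3 Q4]. rewrite Nat.even_add in Q3, Q4.
  destruct (Nat.even j); cbn [Bool.eqb] in *.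
  - pose proof (ff_ge1 a b (j+k) ha hb h4).
    assert (a <= a * ff a b (j+k)) by nia.
    destruct (Nat.even k); lia.
  - pose proof (ee_ge1 a b (j+k) ha hb h4).
    assert (b <= b * ee a b (j+k)) by nia.
    destruct (Nat.even k); cbn [negb] in *; lia.
Qed.

Lemma lin_indep a b j k : 1 <= a -> 1 <= b -> 4 <= a*b -> lin_indep2 (beta1 a b j) (beta2 a b k).
Proof.
  intros ha hb h4. pose proof (BB_neg a b j k ha hb h4) as HB.
  pose proof (qv a b k) as [_ Q2].
  assert (Hq : 2 <= qq a b (beta2 a b k)) by (destruct (Nat.even k); lia).
  pose proof (c_pos a b ha hb h4 k) as [Hy1 _].
  pose proof (Jcd a b ha hb h4 j) as [Hx1 _].
  unfold lin_indep2. unfold beta1, beta2 in *. cbn [fst snd] in *.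
  set (x1 := cseq a b j) in *. set (x2 := dseq a b (S j)) in *.
  set (y1 := cseq a b (S k)) in *. set (y2 := dseq a b k) in *.
  set (D := x1*y2 - y1*x2).
  assert (ID : x1 * qq a b (y1,y2) - y1 * BB a b (x1,x2) (y1,y2) = D*(2*a*y2 - a*b*y1))
    by (unfold qq, BB, D; cbn [fst snd]; ring).
  assert (HD : D <> 0).
  { intro H0. rewrite H0, Z.mul_0_l in ID.
    assert (0 <= x1 * qq a b (y1,y2)) by nia.
    assert (y1 * BB a b (x1,x2) (y1,y2) < 0) by nia. lia. }
  intros p q H1 H2.
  assert (Ep : p * D = y2*(p*x1 + q*y1) - y1*(p*x2 + q*y2)) by (unfold D; ring).
  assert (Eq : q * D = x1*(p*x2 + q*y2) - x2*(p*x1 + q*y1)) by (unfold D; ring).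
  rewrite H1, H2 in Ep, Eq.
  split; [apply (Z.mul_eq_0_l p D) | apply (Z.mul_eq_0_l q D)]; auto; lia.
Qed.

Lemma same_fam1 a b Sg j j' : 1 <= b -> b <= a -> 4 <= a*b -> (b = 1 -> 5 <= a) ->
  pi_system a b Sg -> Sg (beta1 a b j) -> Sg (beta1 a b j') -> j = j'.
Proof.
  intros hb hab h4 h5 [_ HP] H1 H2.
  destruct (lt_eq_lt_dec j j') as [[Hl|He]|Hl]; auto; exfalso.
  - destruct (Nat.lt_exists_pred 0 (j' - j)) as [n [En _]]; [lia|].
    replace j' with (j + S n)%nat in H2 by lia.
    apply (HP _ _ H1 H2). apply (root11 a b n hb hab h4 h5 j).
  - destruct (Nat.lt_exists_pred 0 (j - j')) as [n [En _]]; [lia|].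
    replace j with (j' + S n)%nat in H1 by lia.
    apply (HP _ _ H2 H1). apply (root11 a b n hb hab h4 h5 j').
Qed.
Lemma same_fam2 a b Sg j j' : 1 <= b -> b <= a -> 4 <= a*b -> (b = 1 -> 5 <= a) ->
  pi_system a b Sg -> Sg (beta2 a b j) -> Sg (beta2 a b j') -> j = j'.
Proof.
  intros hb hab h4 h5 [_ HP] H1 H2.
  destruct (lt_eq_lt_dec j j') as [[Hl|He]|Hl]; auto; exfalso.
  - destruct (Nat.lt_exists_pred 0 (j' - j)) as [n [En _]]; [lia|].
    replace j' with (j + S n)%nat in H2 by lia.
    apply (HP _ _ H1 H2). apply (root11 a b n hb hab h4 h5 j).
  - destruct (Nat.lt_exists_pred 0 (j - j')) as [n [En _]]; [lia|].
    replace j with (j' + S n)%nat in H1 by lia.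
    apply (HP _ _ H2 H1). apply (root11 a b n hb hab h4 h5 j').
Qed.

Lemma pair_pi a b j k : 1 <= b -> b <= a -> 4 <= a*b -> (b = 1 -> 5 <= a) ->
  ~ (b = 1 /\ j = 1%nat /\ k = 0%nat) -> pi_system a b (pair_set (beta1 a b j) (beta2 a b k)).
Proof.
  intros hb hab h4 h5 hex. pose proof (nonroot a b j k hb hab h4 h5 hex) as [N1 N2].
  split.
  - intros r [->| ->]; apply beta_real.
  - intros x y [->| ->] [->| ->]; auto; rewrite rsub_self; intro Hr; apply root_nz in Hr; auto.
Qed.

Theorem theorem3p1 (a b : Z) (hb : 1 <= b) (hab : b <= a)
    (hcase : 2 <= b \/ (b = 1 /\ 5 <= a)) :
  (forall S : root -> Prop,
      (forall r, S r -> pos_real_root a b r) -> pi_system a b S ->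
      (forall x y z, S x -> S y -> S z -> x = y \/ x = z \/ y = z) /\
      (forall x y, S x -> S y -> x <> y ->
         exists j k : nat,
           (forall r, S r <-> r = beta1 a b j \/ r = beta2 a b k) /\
           lin_indep2 (beta1 a b j) (beta2 a b k))) /\
  (2 <= b -> forall j k : nat, pi_system a b (pair_set (beta1 a b j) (beta2 a b k))) /\
  (b = 1 -> forall j k : nat,
      pi_system a b (pair_set (beta1 a b j) (beta2 a b k)) <-> (j, k) <> (1%nat, 0%nat)).
Proof.
  assert (ha : 1 <= a) by lia.
  assert (h4 : 4 <= a*b) by (destruct hcase as [H|[-> H]]; nia).
  assert (h5 : b = 1 -> 5 <= a) by lia.
  split; [|split].
  - intros S HS HP.
    assert (three : forall x y z, S x -> S y -> S z -> x = y \/ x = z \/ y = z).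
    { intros x y z Hx Hy Hz.
      destruct (pos_classify a b x ha hb h4 (HS x Hx)) as [jx [Ex|Ex]];
      destruct (pos_classify a b y ha hb h4 (HS y Hy)) as [jy [Ey|Ey]];
      destruct (pos_classify a b z ha hb h4 (HS z Hz)) as [jz [Ez|Ez]]; subst x y z;
      first
        [ solve [left; f_equal; apply (same_fam1 a b S); auto]
        | solve [left; f_equal; apply (same_fam2 a b S); auto]
        | solve [right; left; f_equal; apply (same_fam1 a b S); auto]
        | solve [right; left; f_equal; apply (same_fam2 a b S); auto]
        | solve [right; right; f_equal; apply (same_fam1 a b S); auto]
        | solve [right; right; f_equal; apply (same_fam2 a b S); auto] ]. }
    split; auto.
    intros x y Hx Hy Hne.
    assert (key : forall j k, S (beta1 a b j) -> S (beta2 a b k) -> beta1 a b j <> beta2 a b k ->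
       exists j0 k0 : nat, (forall r, S r <-> r = beta1 a b j0 \/ r = beta2 a b k0) /\
           lin_indep2 (beta1 a b j0) (beta2 a b k0)).
    { intros j k H1 H2 Hd. exists j, k. split; [|apply lin_indep; auto].
      intros r. split.
      - intros Hr. destruct (three (beta1 a b j) (beta2 a b k) r H1 H2 Hr) as [E|[E|E]]; auto.
        exfalso; auto.
      - intros [-> | ->]; auto. }
    destruct (pos_classify a b x ha hb h4 (HS x Hx)) as [jx [Ex|Ex]];
    destruct (pos_classify a b y ha hb h4 (HS y Hy)) as [jy [Ey|Ey]]; subst x y.
    + exfalso. apply Hne. f_equal. apply (same_fam1 a b S); auto.
    + apply (key jx jy); auto.
    + apply (key jy jx); auto.
    + exfalso. apply Hne. f_equal. apply (same_fam2 a b S); auto.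
  - intros Hb2 j k. apply pair_pi; auto. lia.
  - intros Hb1 j k. split.
    + intros [_ HP] E. injection E as -> ->.
      apply (HP (beta1 a b 1) (beta2 a b 0)); [left; auto|right; auto|].
      left. exists nil, false. unfold rsub, beta1, beta2. rewrite ?c0, ?c1, ?d0, ?d1, ?d2.
      cbn. subst b. reflexivity.
    + intros Hne. apply pair_pi; auto.
      intros (_ & -> & ->). apply Hne; auto.
Qed.
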